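(* Let $X, Y, Z$ be Polish spaces and let $P: X \rightsquigarrow Y$ be a tight Feller kernel such that each $P(x,\cdot)$ has a continuous density $\rho_x$ with respect to a fixed reference Borel measure on $Y$. Let $R \subseteq X \times Z$ and $S \subseteq Y \times Z$ be closed, and define $P^{\dagger,\delta} S = \{(x,z) \in X \times Z : \mathrm{supp}_\delta(P(x)) \subseteq S_z\}$. If $0 < \delta \le \epsilon < 1$, then $$P_!^\epsilon(R \cap P^{\dagger,\delta} S) \subseteq P_!^\epsilon R \cap S.$$
   Context: Feller: $x \mapsto \int\phi\,dP(x,\cdot)$ continuous for bounded continuous $\phi$; tight: for each compact $K \subseteq X$, $\eta>0$ there is compact $L$ with $P(x,L) \ge 1-\eta$ for $x \in K$. $S_z = \{y : (y,z) \in S\}$. The $\epsilon$-highest density region is $\mathrm{supp}_\epsilon(P(x)) = \{y : \rho_x(y) \ge \lambda_\epsilon\}$ with $\lambda_\epsilon = \sup\{\lambda \ge 0 : P(x, \{y : \rho_x(y) \ge \lambda\}) \ge 1-\epsilon\}$. The $\epsilon$-pushforward is $P_!^\epsilon T = \overline{\bigcup_{(x,z) \in T} \mathrm{supp}_\epsilon(P(x)) \times \{z\}}$ (closure in $Y \times Z$). *)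

(* Defs.v *)
From HB Require Import structures.
From mathcomp Require Import all_boot all_order all_algebra.
From mathcomp Require Import all_classical all_reals all_analysis measurable_realfun.
Set Implicit Arguments. Unset Strict Implicit. Unset Printing Implicit Defensive.
Import Order.TTheory GRing.Theory Num.Theory.
Import numFieldNormedType.Exports.
Local Open Scope classical_set_scope.
Local Open Scope ring_scope.

Definition separable_space (T : topologicalType) : Prop :=
  exists D : set T, countable D /\ closure D = setT.

Definition completely_metrizable (R : realType) (T : topologicalType) : Prop :=
  exists d : T -> T -> R,
    (forall x y, 0 <= d x y) /\
    (forall x y, d x y = 0 <-> x = y) /\
    (forall x y, d x y = d y x) /\
    (forall x y z, d x z <= d x y + d y z) /\
    (forall A : set T, open A <->
       (forall x, A x -> exists e, 0 < e /\ forall y, d x y < e -> A y)) /\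
    (forall u : nat -> T,
       (forall e, 0 < e -> exists N, forall m n,
           (N <= m)%N -> (N <= n)%N -> d (u m) (u n) < e) ->
       exists l, forall e, 0 < e -> exists N, forall n,
           (N <= n)%N -> d (u n) l < e).

Definition polish (R : realType) (T : topologicalType) : Prop :=
  separable_space T /\ completely_metrizable R T.

Definition borel (Y : ptopologicalType) := g_sigma_algebraType (@open Y).

Section Kernels.
Variables (R : realType) (X : topologicalType) (Y : ptopologicalType).

Definition markov_kernel (P : X -> {measure set (borel Y) -> \bar R}) : Prop :=
  (forall x, P x setT = 1%E) /\
  (forall A : set (borel Y), measurable A ->
     forall B : set (\bar R), measurable B ->
       <<s @open X >> ((fun x => P x A) @^-1` B)).

Definition feller (P : X -> {measure set (borel Y) -> \bar R}) : Prop :=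
  forall phi : Y -> R, continuous phi -> (exists M, forall y, `|phi y| <= M) ->
    continuous (fun x => Rintegral (P x) setT (phi : borel Y -> R)).

Definition tight_kernel (P : X -> {measure set (borel Y) -> \bar R}) : Prop :=
  forall K : set X, compact K -> forall eta : R, 0 < eta ->
    exists L : set Y, compact L /\
      forall x, K x -> ((1 - eta)%:E <= P x (L : set (borel Y)))%E.

Definition continuous_density (mu : {measure set (borel Y) -> \bar R})
    (P : X -> {measure set (borel Y) -> \bar R}) (rho : X -> Y -> R) : Prop :=
  forall x, (forall y, 0 <= rho x y) /\ continuous (rho x) /\
    forall A : set (borel Y), measurable A ->
      P x A = (\int[mu]_(y in A) (rho x y)%:E)%E.

End Kernels.

Section HDR.
Variables (R : realType) (X Z : topologicalType) (Y : ptopologicalType).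
Variables (P : X -> {measure set (borel Y) -> \bar R}) (rho : X -> Y -> R).

Definition hdr_level (eps : R) (x : X) : R :=
  sup [set l : R | 0 <= l /\
         ((1 - eps)%:E <= P x ([set y | (l <= rho x y)%R] : set (borel Y)))%E].

Definition hdr_supp (eps : R) (x : X) : set Y :=
  [set y | hdr_level eps x <= rho x y].

Definition eps_pushforward (eps : R) (T : set (X * Z)) : set (Y * Z) :=
  closure [set yz | exists x, T (x, yz.2) /\ hdr_supp eps x yz.1].

Definition p_dagger (delta : R) (S : set (Y * Z)) : set (X * Z) :=
  [set xz | hdr_supp delta xz.1 `<=` [set y | S (y, xz.2)]].

End HDR.

(* Main.v *)
Require Import Defs.
From HB Require Import structures.
From mathcomp Require Import all_boot all_order all_algebra.
From mathcomp Require Import all_classical all_reals all_analysis measurable_realfun.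
Import Order.TTheory GRing.Theory Num.Theory.
Import numFieldNormedType.Exports.
Local Open Scope classical_set_scope.
Local Open Scope ring_scope.

Lemma closed_meas (Y : ptopologicalType) (C : set Y) :
  closed C -> measurable (C : set (borel Y)).
Proof.
move=> cC; rewrite -(setCK C); apply: measurableC.
apply: sub_gen_smallest; by rewrite openC.
Qed.

Lemma level_meas (R : realType) (Y : ptopologicalType) (f : Y -> R) (l : R) :
  continuous f -> measurable ([set y | l <= f y] : set (borel Y)).
Proof.
move=> cf; apply: closed_meas.
by have := (continuous_closedP f).1 cf _ (@closed_ge R l).
Qed.

Lemma level_has_sup (R : realType) (X : topologicalType) (Y : ptopologicalType)
  (P : X -> {measure set (borel Y) -> \bar R}) (rho : X -> Y -> R) (e : R) (x : X) :
  P x setT = 1%E -> continuous (rho x) -> (forall y, 0 <= rho x y) -> 0 <= e -> e < 1 ->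
  has_sup [set l : R | 0 <= l /\
         ((1 - e)%:E <= P x ([set y | (l <= rho x y)%R] : set (borel Y)))%E].
Proof.
move=> P1 crho rho0 e0 e1; split.
  exists 0; split => //; rewrite (_ : [set y | _] = setT); last first.
    by apply/seteqP; split => y //= _.
  by rewrite P1 lee_fin lerBlDr lerDl.
pose F := fun n : nat => ([set y | (n%:R <= rho x y)%R] : set (borel Y)).
have mF : forall n, measurable (F n) by move=> n; exact: level_meas.
have F0 : \bigcap_n F n = set0.
  apply/seteqP; split => y //= Hy.
  have Hn := archi_boundP (rho0 y).
  have H : (Num.Def.archi_bound (rho x y))%:R <= rho x y by exact: (Hy _ I).
  by have := lt_le_trans Hn H; rewrite ltxx.
have := @nonincreasing_cvg_mu _ _ _ (P x) F.
rewrite F0 measure0 => /(_ _ mF _ _).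
have fin : (P x (F 0%N) < +oo)%E.
  apply: (@le_lt_trans _ _ (P x setT)); last by rewrite P1 ltry.
  apply: le_measure.
  - by rewrite inE.
  - by rewrite inE.
  - by [].
have hom : {homo F : n m / (n <= m)%N >-> (m <= n)%O}.
  move=> n m nm; apply/subsetPset; rewrite /F => y /=; apply: le_trans; by rewrite ler_nat.
move=> /(_ fin measurable0 hom) H.
have [N _ HN] := H _ (@nbhs_open_ereal_lt R 0 (fun _ => 1 - e) ltac:(by rewrite subr_gt0)).
have {HN} HN := HN N (leqnn N).
exists N%:R => l [l0 Hl]; rewrite leNgt; apply/negP => lN.
have sub : ([set y | l <= rho x y] : set (borel Y)) `<=` F N.
  by move=> y /= ly; apply: (le_trans (ltW lN)).
have : (P x [set y | (l <= rho x y)%R] <= P x (F N))%E.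
  apply: le_measure => //; rewrite inE; [exact: level_meas| exact: mF].
move=> /(le_trans Hl) => H2. have := lt_le_trans HN H2. by rewrite ltxx.
Qed.

Theorem mainTheorem17 (R : realType) (X Z : topologicalType) (Y : ptopologicalType)
  (mu : {measure set (borel Y) -> \bar R})
  (P : X -> {measure set (borel Y) -> \bar R}) (rho : X -> Y -> R)
  (RR : set (X * Z)) (S : set (Y * Z)) (delta eps : R) :
  polish R X -> polish R Y -> polish R Z ->
  markov_kernel P -> tight_kernel P -> feller P ->
  continuous_density mu P rho ->
  closed RR -> closed S ->
  0 < delta -> delta <= eps -> eps < 1 ->
  eps_pushforward P rho eps (RR `&` p_dagger P rho delta S)
    `<=` eps_pushforward P rho eps RR `&` S.
Proof.
move=> _ _ _ [P1 _] _ _ dens cR cS d0 de e1.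
have lev : forall x, hdr_level P rho delta x <= hdr_level P rho eps x.
  move=> x; have [rho0 [crho _]] := dens x.
  have d1 : delta < 1 by apply: le_lt_trans e1.
  rewrite /hdr_level; apply: sup_le.
  - move=> l [l0 Hl]; apply: le_down; split => //; apply: le_trans Hl.
    by rewrite lee_fin lerD2l lerN2.
  - exact: (@level_has_sup _ _ _ P rho delta x (P1 x) crho rho0 (ltW d0) d1).1.
  - exact: (@level_has_sup _ _ _ P rho eps x (P1 x) crho rho0 (le_trans (ltW d0) de) e1).
move=> [y z] Hc; split.
  apply: closure_subset Hc => -[y' z'] /= [x [[Rx _] hy]]; by exists x.
have cl := (closure_id S).1 cS; rewrite cl.
apply: closure_subset Hc => -[y' z'] /= [x [[Rx Dx] hy]]; apply: Dx.
rewrite /hdr_supp /=; exact: le_trans (lev x) hy.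
Qed.
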